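(* Let $(X,\ast,u,d)$ be a finite GL-rack, let $\Delta=\alpha_1\cdots\alpha_n$ be the disjoint cycle decomposition of its diagonal map (fixed points counted as $1$-cycles), $A_i=\operatorname{supp}(\alpha_i)$, and let $B_1,\dots,B_m$ be the sets obtained by taking, for each cycle length $\ell$ occurring, the union of all $A_i$ with $|A_i|=\ell$. Then for each $1\le j\le m$, $B_j$ is closed under $\ast$, $u$ and $d$, and $(B_j,\ast|_{B_j},u|_{B_j},d|_{B_j})$ is a GL-rack.
   Context: A rack is a set $X$ with a binary operation $\ast$ such that for every $y\in X$ the map $x\mapsto x\ast y$ is a bijection of $X$ and $(x\ast y)\ast z=(x\ast z)\ast(y\ast z)$ for all $x,y,z$. A GL-rack is a quadruple $(X,\ast,u,d)$ where $(X,\ast)$ is a rack and $u,d\colon X\to X$ are maps such that for all $x,y\in X$: $u(d(x\ast x))=d(u(x\ast x))=x$; $u(x\ast y)=u(x)\ast y$ and $d(x\ast y)=d(x)\ast y$; $x\ast u(y)=x\ast d(y)=x\ast y$. The diagonal map is $\Delta(x)=x\ast x$; for a finite GL-rack it is a bijection (rack automorphism) and $\Delta=(u\circ d)^{-1}$. *)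

(* Defs.v *)
From mathcomp Require Import all_boot.
Set Implicit Arguments. Unset Strict Implicit. Unset Printing Implicit Defensive.

Definition is_rack_on (X : finType) (B : {set X}) (op : X -> X -> X) : Prop :=
  [/\ (forall x y, x \in B -> y \in B -> op x y \in B),
      (forall y z, y \in B -> z \in B -> exists! x, x \in B /\ op x y = z)
    & (forall x y z, x \in B -> y \in B -> z \in B ->
         op (op x y) z = op (op x z) (op y z))].

Definition is_GLrack_on (X : finType) (B : {set X}) (op : X -> X -> X)
    (u d : X -> X) : Prop :=
  [/\ is_rack_on B op,
      (forall x, x \in B -> u x \in B /\ d x \in B),
      (forall x, x \in B -> u (d (op x x)) = x /\ d (u (op x x)) = x),
      (forall x y, x \in B -> y \in B -> u (op x y) = op (u x) y /\ d (op x y) = op (d x) y)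
    & (forall x y, x \in B -> y \in B -> op x (u y) = op x y /\ op x (d y) = op x y)].

Definition is_GLrack (X : finType) (op : X -> X -> X) (u d : X -> X) : Prop :=
  is_GLrack_on [set: X] op u d.

Definition diag (X : Type) (op : X -> X -> X) (x : X) : X := op x x.

(* B_l: union of the supports of all cycles of Delta of length l
   (the cycle of x under Delta has length order (diag op) x). *)
Definition cycle_class (X : finType) (op : X -> X -> X) (l : nat) : {set X} :=
  [set x | order (diag op) x == l].

(* Main.v *)
Require Import Defs.
From mathcomp Require Import all_boot.

Lemma order_comm (T : finType) (f g : T -> T) :
  injective f -> injective g -> (forall x, f (g x) = g (f x)) ->
  forall x, order f (g x) = order f x.
Proof.
move=> fi gi fg x.
have cyc : fcycle f (map g (orbit f x)).
  rewrite cycle_map; apply: sub_cycle (cycle_orbit fi x).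
  by move=> a b /= /eqP <-; rewrite fg.
rewrite (order_cycle cyc); first by rewrite size_map size_orbit.
  by rewrite map_inj_uniq // orbit_uniq.
by rewrite map_f // in_orbit.
Qed.

Theorem lemma3p6 (X : finType) (op : X -> X -> X) (u d : X -> X) :
  is_GLrack op u d ->
  forall l : nat, (exists x : X, order (diag op) x = l) ->
  (forall x y, x \in cycle_class op l -> y \in cycle_class op l ->
      op x y \in cycle_class op l) /\
  (forall x, x \in cycle_class op l ->
      u x \in cycle_class op l /\ d x \in cycle_class op l) /\
  is_GLrack_on (cycle_class op l) op u d.
Proof.
case=> [[_ Hbij Hsd] _ Hud Hcomm Hab] l _.
have T (x : X) : x \in [set: X] := in_setT x.
have Rinj y : injective (op^~ y).
  move=> a b /= e; have [x [_ U]] := Hbij y (op a y) (T y) (T _).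
  by rewrite -(U a) ?(U b) ?T.
have Dinj : injective (diag op).
  move=> a b e; have [<- _] := Hud a (T a); have [<- _] := Hud b (T b); by move: e; rewrite /diag => ->.
have surj_inj (g : X -> X) : (forall x, exists y, g y = x) -> injective g.
  move=> s0.
  have s x : exists y, g y == x by case: (s0 x) => y <-; exists y.
  pose h x := xchoose (s x).
  have hK : cancel h g by move=> x; exact/eqP/(xchooseP (s x)).
  have hi : injective h := can_inj hK.
  have [h' K1 K2] := injF_bij hi.
  have E x : g x = h' x by rewrite -{1}(K2 x) hK.
  by move=> a b; rewrite !E; apply: (can_inj K2).
have uinj : injective u.
  by apply: surj_inj => x; exists (d (diag op x)); have [] := Hud x (T x).
have dinj : injective d.
  by apply: surj_inj => x; exists (u (diag op x)); have [] := Hud x (T x).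
have DR x y : diag op (op x y) = op (diag op x) y.
  by rewrite /diag (Hsd x x y) ?T.
have Du x : diag op (u x) = u (diag op x).
  by rewrite /diag (Hab _ _ (T _) (T _)).1 (Hcomm _ _ (T _) (T _)).1.
have Dd x : diag op (d x) = d (diag op x).
  by rewrite /diag (Hab _ _ (T _) (T _)).2 (Hcomm _ _ (T _) (T _)).2.
have Oop x y : order (diag op) (op x y) = order (diag op) x.
  have c z : diag op ((op^~ y) z) = (op^~ y) (diag op z) by rewrite /= DR.
  exact: (@order_comm X _ _ Dinj (Rinj y) c x).
have Ou x : order (diag op) (u x) = order (diag op) x by exact: (@order_comm X _ _ Dinj uinj Du x).
have Od x : order (diag op) (d x) = order (diag op) x by exact: (@order_comm X _ _ Dinj dinj Dd x).
have inC x : (x \in cycle_class op l) = (order (diag op) x == l) by rewrite inE.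
have H1 : forall x y, x \in cycle_class op l -> op x y \in cycle_class op l.
  by move=> x y; rewrite !inC Oop.
have H2 : forall x, x \in cycle_class op l ->
      u x \in cycle_class op l /\ d x \in cycle_class op l.
  by move=> x; rewrite !inC Ou Od.
split; first by move=> x y Hx _; apply: H1.
split=> //.
split=> //.
- split; first by move=> x y Hx _; apply: H1.
  + move=> y z Hy Hz; have [x [[_ Ex] U]] := Hbij y z (T y) (T z).
    exists x; split.
      by split=> //; move: Hz; rewrite !inC -Ex Oop.
    by move=> x' [_ E']; apply: U.
  by move=> x y z _ _ _; apply: Hsd.
- by move=> x _; apply: Hud.
- by move=> x y _ _; apply: Hcomm.
- by move=> x y _ _; apply: Hab.
Qed.
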